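(* Let $G=(V,A)$, $\Xi$ and $\mathcal{S}^1$ be as in the context. Let $\bar{T}$ be a tree in the undirected graph $\bar{G}$ underlying $G$ with node set $\widetilde{\mathcal{I}}\subseteq V$, and let $l\in A$ be an arc that is incident to exactly one node of $\bar{T}$. Then for any partition $\widetilde{\mathcal{I}}_1,\widetilde{\mathcal{I}}_2$ of $\widetilde{\mathcal{I}}$ (i.e. $\widetilde{\mathcal{I}}_1\cap\widetilde{\mathcal{I}}_2=\emptyset$, $\widetilde{\mathcal{I}}_1\cup\widetilde{\mathcal{I}}_2=\widetilde{\mathcal{I}}$): (i) if $h(l)\in\widetilde{\mathcal{I}}$, then $[\{i^+\}_{i\in\widetilde{\mathcal{I}}_1},\{i^-\}_{i\in\widetilde{\mathcal{I}}_2}]$ is an EC\&R assignment for class-$l^+$; (ii) if $h(l)\in\widetilde{\mathcal{I}}$, then $[\{i^-\}_{i\in\widetilde{\mathcal{I}}_1},\{i^+\}_{i\in\widetilde{\mathcal{I}}_2}]$ is an EC\&R assignment for class-$l^-$; (iii) if $t(l)\in\widetilde{\mathcal{I}}$, then $[\{i^-\}_{i\in\widetilde{\mathcal{I}}_1},\{i^+\}_{i\in\widetilde{\mathcal{I}}_2}]$ is an EC\&R assignment for class-$l^+$; (iv) if $t(l)\in\widetilde{\mathcal{I}}$, then $[\{i^+\}_{i\in\widetilde{\mathcal{I}}_1},\{i^-\}_{i\in\widetilde{\mathcal{I}}_2}]$ is an EC\&R assignment for class-$l^-$.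
   Context: $G=(V,A)$ is a directed network; its arcs are identified with $N=\{1,\dots,n\}$, $x_a$ is the flow on arc $a$, $t(a)$ and $h(a)$ are the tail and head of $a$, and $\delta^+(v),\delta^-(v)$ are the outgoing and incoming arcs of node $v$. $\Xi=\{x\in\mathbb{R}^n: Ex\ge f,\ 0\le x\le u\}$ where the rows $E_{t\cdot}x\ge f_t$, $t\in T$, are: for each $v\in V$, the positive flow-balance inequality (index $v^+$) $\sum_{a\in\delta^+(v)}x_a-\sum_{a\in\delta^-(v)}x_a\ge f_v$ and the negative flow-balance inequality (index $v^-$) $-\sum_{a\in\delta^+(v)}x_a+\sum_{a\in\delta^-(v)}x_a\ge -f_v$; $u$ is the capacity vector. $\mathcal{S}^1=\{(x,y_1,z)\in\Xi\times[0,1]\times\mathbb{R}^A : y_1x_k=z_k\ \forall k\in A\}$. EC\&R assignment (case of a single $y$ variable): a class is a pair $l\in A$ and sign $\sigma\in\{+,-\}$ (class-$l^\sigma$). A pair $[\mathcal{I}_1,\bar{\mathcal{I}}]$ of disjoint subsets of $T$ is an EC\&R assignment for class-$l^\sigma$ if there are positive weights $\gamma_t$ ($t\in\mathcal{I}_1$), $\theta_t$ ($t\in\bar{\mathcal{I}}$) such that, when one sums the base equality $y_1x_l-z_l=0$ multiplied by $+1$ (if $\sigma=+$) or $-1$ (if $\sigma=-$), the inequalities $\gamma_t\,y_1(E_{t\cdot}x-f_t)\ge 0$ for $t\in\mathcal{I}_1$, and $\theta_t(1-y_1)(E_{t\cdot}x-f_t)\ge0$ for $t\in\bar{\mathcal{I}}$,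 the following hold: (C1) at least $|\mathcal{I}_1|+|\bar{\mathcal{I}}|$ bilinear terms $y_1x_i$ are canceled (have coefficient zero in the sum although they appear in some summand); (C2) if $\mathcal{I}_1\cup\bar{\mathcal{I}}\neq\emptyset$, then for each constraint used in the sum (including the base equality), at least one of the bilinear terms created by multiplying it with its weight is canceled. *)

(* Defs.v *)
From HB Require Import structures.
From mathcomp Require Import all_boot all_order all_algebra.
From mathcomp Require Import reals.
Set Implicit Arguments. Unset Strict Implicit. Unset Printing Implicit Defensive.
Import Order.TTheory GRing.Theory Num.Theory.
Local Open Scope ring_scope.

Section Network.
Variables (R : realType) (V A : finType) (tl hd : A -> V).

(* Row index set T = V x {+,-}; (v,true) is v^+, (v,false) is v^-. *)
(* Coefficient of x_a in the row E_{t.} of the flow-balance system. *)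
Definition Erow (tr : V * bool) (a : A) : R :=
  (if tr.2 then 1 else -1) *
  (((tl a == tr.1)%:R : R) - ((hd a == tr.1)%:R : R)).

(* Coefficient of the bilinear term y_1 x_a in the aggregated sum:
   sigma*(y x_l - z_l) + sum_{t in I1} gamma_t y (E_t x - f_t)
   + sum_{t in Ib} theta_t (1-y)(E_t x - f_t). *)
Definition total_coef (l : A) (sigma : bool) (I1 Ib : {set V * bool})
    (gamma theta : V * bool -> R) (a : A) : R :=
  (if a == l then (if sigma then 1 else -1) else 0)
  + \sum_(t in I1) gamma t * Erow t a
  - \sum_(t in Ib) theta t * Erow t a.

Definition appears (l : A) (I1 Ib : {set V * bool})
    (gamma theta : V * bool -> R) (a : A) : bool :=
  [|| a == l, [exists t in I1, gamma t * Erow t a != 0]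
    | [exists t in Ib, - theta t * Erow t a != 0]].

Definition canceled l sigma I1 Ib gamma theta (a : A) : bool :=
  appears l I1 Ib gamma theta a && (total_coef l sigma I1 Ib gamma theta a == 0).

(* [I1, Ib] is an EC&R assignment for class-l^sigma (single y variable). *)
Definition ECR_assignment (l : A) (sigma : bool) (I1 Ib : {set V * bool}) : Prop :=
  [disjoint I1 & Ib] /\
  exists gamma theta : V * bool -> R,
    (forall t, t \in I1 -> 0 < gamma t) /\
    (forall t, t \in Ib -> 0 < theta t) /\
    (#|I1| + #|Ib| <= #|[set a | canceled l sigma I1 Ib gamma theta a]|)%N /\
    (I1 :|: Ib != set0 ->
       (* base equality: its only created bilinear term is y x_l *)
       canceled l sigma I1 Ib gamma theta l /\
       (forall t, t \in I1 -> exists a,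
           canceled l sigma I1 Ib gamma theta a && (gamma t * Erow t a != 0)) /\
       (forall t, t \in Ib -> exists a,
           canceled l sigma I1 Ib gamma theta a && (- theta t * Erow t a != 0))).

Definition adjF (F : {set A}) : rel V :=
  fun u v => [exists a in F, ((tl a == u) && (hd a == v)) || ((tl a == v) && (hd a == u))].

Definition is_tree (I : {set V}) (F : {set A}) : Prop :=
  I != set0 /\
  (forall a, a \in F -> (tl a \in I) && (hd a \in I)) /\
  #|F| = (#|I| - 1)%N /\
  (forall u v, u \in I -> v \in I -> connect (adjF F) u v).

End Network.

(* Main.v *)
Require Import Defs.
From HB Require Import structures.
From mathcomp Require Import all_boot all_order all_algebra.
From mathcomp Require Import reals.
From mathcomp Require Import ring.
Import Order.TTheory GRing.Theory Num.Theory.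
Local Open Scope ring_scope.

Lemma Erow_neq0 (R : realType) (V A : finType) (tl hd : A -> V) t a :
  (Erow R tl hd t a != 0) = ((tl a == t.1) != (hd a == t.1)).
Proof.
rewrite /Erow; case: t => i s /=.
by case: s; case: (tl a == i); case: (hd a == i); rewrite /= ?subrr ?subr0 ?sub0r ?mulr0 ?mul1r ?mulN1r ?oppr_eq0 ?oppr0 ?eqxx ?oner_eq0.
Qed.

Lemma sum_ind (R : realType) (V : finType) (S : {set V}) (x : V) :
  \sum_(i in S) ((x == i)%:R : R) = (x \in S)%:R.
Proof.
case: (boolP (x \in S)) => xS.
  rewrite (bigD1 x) //= eqxx big1 ?addr0 // => i /andP [_ ix].
  by rewrite eq_sym (negbTE ix).
rewrite big1 // => i iS; case: eqP => // E; by rewrite E iS in xS.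
Qed.

Lemma sum_rows (R : realType) (V A : finType) (tl hd : A -> V) (S : {set V}) (s : bool) a :
  \sum_(t in [set (i, s) | i in S]) (1 * Erow R tl hd t a) =
  (if s then 1 else -1) * ((tl a \in S)%:R - (hd a \in S)%:R).
Proof.
rewrite big_imset /=; last by move=> i j _ _ [].
rewrite /Erow /= -mulr_sumr mul1r -mulr_sumr sumrB !sum_ind //.
Qed.

Lemma tree_arcs (V A : finType) (tl hd : A -> V) (I : {set V}) (F : {set A})
    (r : V) (a0 : A) :
  (forall v, v \in I -> connect (adjF tl hd F) v r) ->
  exists f : V -> A, {in I :\ r &, injective f} /\
    forall v, v \in I :\ r ->
      [/\ f v \in F, tl (f v) != hd (f v) & (tl (f v) == v) || (hd (f v) == v)].
Proof.
move=> hconn.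
set e := adjF tl hd F.
pose P v n := [exists p : n.-tuple V, path e v p && (last v p == r)]
   || ~~ connect e v r.
have exP : forall v, exists n, P v n.
  move=> v; case: (boolP (connect e v r)) => [/connectP [p pp lp]|nc].
    exists (size p); apply/orP; left; apply/existsP; exists (in_tuple p).
    by rewrite /= pp -lp eqxx.
  by exists 0%N; rewrite /P nc orbT.
pose d v := ex_minn (exP v).
have dlt : forall v, v \in I :\ r -> exists u,
    (d u < d v)%N /\ e v u.
  move=> v; rewrite in_setD1 => /andP [vr vI].
  have cv := hconn v vI.
  rewrite /d; case: ex_minnP => n; rewrite /P cv orbF => /existsP [t /andP [pt lt]] minn.
  case: t pt lt => [[|u p] /= sz]; first by move=> _ /eqP vr'; rewrite vr' eqxx in vr.
  move=> /andP [evu pu] lu.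
  exists u; split => //.
  case: ex_minnP => m _ minm.
  have : P u (size p).
    apply/orP; left; apply/existsP; exists (in_tuple p); by rewrite /= pu lu.
  move/minm; move/eqP: sz => <-; by [].
pose Q v a := (a \in F) && [exists u, (d u < d v)%N &&
   (((tl a == v) && (hd a == u)) || ((tl a == u) && (hd a == v)))].
have Qex : forall v, v \in I :\ r -> exists a, Q v a.
  move=> v /dlt [u [duv /existsP [a /andP [aF ha]]]].
  exists a; rewrite /Q aF /=; apply/existsP; exists u; by rewrite duv.
pose f v := odflt a0 [pick a | Q v a].
have fQ : forall v, v \in I :\ r -> Q v (f v).
  move=> v /Qex [a qa]; rewrite /f; case: pickP => //= h; by rewrite h in qa.
exists f; split.
  move=> v w vI wI fvw.
  have := fQ v vI; have := fQ w wI; rewrite -fvw.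
  set a := f v.
  move=> /andP [_ /existsP [u' /andP [du' hw]]] /andP [_ /existsP [u /andP [du hv]]].
  apply/eqP; apply/negPn/negP => vw.
  move: hv hw; case/orP => /andP [/eqP t1 /eqP h1]; case/orP => /andP [/eqP t2 /eqP h2].
  - by move: vw; rewrite -t1 -t2 eqxx.
  - have E1 : w = u by rewrite -h2 h1.
    have E2 : v = u' by rewrite -t1 t2.
    by move: du du'; rewrite -E1 -E2 => du du'; move: (ltn_trans du du'); rewrite ltnn.
  - have E1 : w = u by rewrite -t2 t1.
    have E2 : v = u' by rewrite -h1 h2.
    by move: du du'; rewrite -E1 -E2 => du du'; move: (ltn_trans du du'); rewrite ltnn.
  - by move: vw; rewrite -h1 -h2 eqxx.
move=> v vI; have := fQ v vI; set a := f v.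
move=> /andP [aF /existsP [u /andP [du hv]]].
split => //.
  apply/eqP => ta; move: hv; rewrite ta; case/orP => /andP [/eqP h1 /eqP h2]; by move: du; rewrite -h1 -h2 ltnn.
by case/orP: hv => /andP [/eqP -> /eqP ->]; rewrite eqxx ?orbT.
Qed.

Lemma ind_union (R : realType) (V : finType) (I I1 I2 : {set V}) x :
  I1 :&: I2 = set0 -> I1 :|: I2 = I ->
  ((x \in I1)%:R + (x \in I2)%:R : R) = (x \in I)%:R.
Proof.
move=> hd hu; rewrite -hu inE.
case: (boolP (x \in I1)) => x1; case: (boolP (x \in I2)) => x2 //=; rewrite ?addr0 ?add0r //.
have : x \in I1 :&: I2 by rewrite inE x1 x2.
by rewrite hd inE.
Qed.

Lemma main_gen (R : realType) (V A : finType) (tl hd : A -> V)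
    (I : {set V}) (F : {set A}) (l : A) (I1 I2 : {set V}) (s1 sigma : bool) :
  is_tree tl hd I F -> (tl l \in I) != (hd l \in I) ->
  I1 :&: I2 = set0 -> I1 :|: I2 = I -> sigma = (s1 == (hd l \in I)) ->
  ECR_assignment R tl hd l sigma [set (i, s1) | i in I1] [set (i, ~~ s1) | i in I2].
Proof.
move=> [_ [FI [_ conn]]] xl hdis hun hsig.
set P := [set (i, s1) | i in I1]; set Q := [set (i, ~~ s1) | i in I2].
pose one := fun _ : V * bool => (1 : R).
have tot : forall a, total_coef tl hd l sigma P Q one one a =
   (if a == l then (if sigma then 1 else -1) else 0) +
   (if s1 then 1 else -1) * ((tl a \in I)%:R - (hd a \in I)%:R).
  move=> a; rewrite /total_coef /one !sum_rows -!(@ind_union R _ I I1 I2 _ hdis hun).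
  by rewrite -addrA; congr (_ + _); case: (s1); rewrite ?mul1r ?mulN1r; ring.
set r := if hd l \in I then hd l else tl l.
have rI : r \in I by rewrite /r; case: ifP => // h; move: xl; rewrite h; case: (tl l \in I).
have lr : (tl l == r) != (hd l == r).
  rewrite /r; case: ifP => h.
    have : tl l != hd l by apply/eqP => E; move: xl; rewrite E h.
    by move/negPf ->; rewrite eqxx.
  have : hd l != tl l by apply/eqP => E; move: xl; rewrite -E h.
  by move/negPf ->; rewrite eqxx.
have [f [finj fP]] := @tree_arcs V A tl hd I F r l (fun v vI => conn v r vI rI).
have fl : forall v, v \in I :\ r -> f v != l.
  move=> v vI; apply/eqP => E; have [fF _ _] := fP v vI.
  by move: xl (FI _ fF); rewrite E => /negPf; case: (tl l \in I); case: (hd l \in I).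
have canl : canceled tl hd l sigma P Q one one l.
  rewrite /canceled /appears eqxx /= tot eqxx hsig.
  move: xl; case: (tl l \in I); case: (hd l \in I); case: (s1) => //= _; 
  rewrite ?subrr ?subr0 ?sub0r ?mulr1 ?mulrN1 ?opprK ?subrr ?addrN ?addNr //.
have canf : forall v, v \in I :\ r -> canceled tl hd l sigma P Q one one (f v).
  move=> v vI; have [fF nl _] := fP v vI; have /andP [tI hI] := FI _ fF.
  have nl2 : (hd (f v) == tl (f v)) = false by rewrite eq_sym (negPf nl).
  rewrite /canceled tot (negPf (fl v vI)) tI hI subrr mulr0 addr0 eqxx andbT.
  rewrite /appears; apply/orP; right.
  move: tI; rewrite -hun inE => /orP [t1|t2]; apply/orP; [left|right];
    apply/existsP; [exists (tl (f v), s1)|exists (tl (f v), ~~ s1)];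
    rewrite /one ?mulN1r ?oppr_eq0 ?mul1r Erow_neq0 /= eqxx nl2 andbT.
    by rewrite /P imset_f.
  by rewrite /Q imset_f.
have rowok : forall i s, i \in I -> exists a,
    canceled tl hd l sigma P Q one one a && (Erow R tl hd (i, s) a != 0).
    move=> i s iI; case: (eqVneq i r) => [->|ir].
    by exists l; rewrite canl Erow_neq0.
  have viI : i \in I :\ r by rewrite in_setD1 ir iI.
  exists (f i); rewrite canf //= Erow_neq0 /=.
  have [_ nl inc] := fP i viI.
  have key : forall x y z : V, x != y -> (x == z) || (y == z) -> (x == z) != (y == z).
    by move=> x y z; case: (x =P z) => [->|_]; case: (y =P z) => [->|_]; rewrite ?eqxx.
  exact: key.
split.
  apply/pred0P => t /=; apply/negP => /andP [/imsetP [i _ ->] /imsetP [j _ [_]]].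
  by case: (s1).
exists one, one; split; first by move=> *; rewrite /one ltr01.
split; first by move=> *; rewrite /one ltr01.
split.
  have -> : (#|P| + #|Q| = #|I|)%N.
    rewrite !card_imset; try by move=> x y [].
    by rewrite -hun cardsU hdis cards0 subn0.
  apply: leq_trans (subset_leq_card (_ : l |: f @: (I :\ r) \subset _)).
    rewrite cardsU1 card_in_imset // (cardsD1 r I) rI add1n.
    case: imsetP => //= -[v vI E]; by move: (fl v vI); rewrite E eqxx.
  apply/subsetP => a; rewrite !inE => /orP [/eqP ->//|/imsetP [v vI ->]].
  exact: canf.
move=> _; split => //.
split.
  move=> t /imsetP [i i1 ->]; have iI : i \in I by rewrite -hun inE i1.
  have [a /andP [ca ea]] := rowok i s1 iI; exists a; by rewrite ca /one mul1r.
move=> t /imsetP [i i2 ->]; have iI : i \in I by rewrite -hun inE i2 orbT.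
have [a /andP [ca ea]] := rowok i (~~ s1) iI; exists a.
by rewrite ca /one mulN1r oppr_eq0.
Qed.

Theorem theorem2 (R : realType) (V A : finType) (tl hd : A -> V)
    (I : {set V}) (F : {set A}) (l : A) :
  is_tree tl hd I F ->
  (tl l \in I) != (hd l \in I) ->
  forall I1 I2 : {set V}, I1 :&: I2 = set0 -> I1 :|: I2 = I ->
  (hd l \in I -> ECR_assignment R tl hd l true
                   [set (i, true) | i in I1] [set (i, false) | i in I2]) /\
  (hd l \in I -> ECR_assignment R tl hd l false
                   [set (i, false) | i in I1] [set (i, true) | i in I2]) /\
  (tl l \in I -> ECR_assignment R tl hd l true
                   [set (i, false) | i in I1] [set (i, true) | i in I2]) /\
  (tl l \in I -> ECR_assignment R tl hd l false
                   [set (i, true) | i in I1] [set (i, false) | i in I2]).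
Proof.
move=> ht xl I1 I2 hdis hun.
have hdn : tl l \in I -> (hd l \in I) = false.
  by move=> t; move: xl; rewrite t; case: (hd l \in I).
split; [|split; [|split]] => h.
- by apply: (@main_gen R V A tl hd I F l I1 I2 true true) => //; rewrite h.
- by apply: (@main_gen R V A tl hd I F l I1 I2 false false) => //; rewrite h.
- by apply: (@main_gen R V A tl hd I F l I1 I2 false true) => //; rewrite hdn.
- by apply: (@main_gen R V A tl hd I F l I1 I2 true false) => //; rewrite hdn.
Qed.
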